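(* Let $k\ge 1$. The square complex orthogonal designs $\mathcal{C}_k$ and $\mathcal{C}_k^-$ induce two non-equivalent irreducible representations of dimension $2^{k-1}$ of the group $\mathcal{G}_{2k-1}$.
   Context: Let $z_1,\ldots,z_k$ be formal complex indeterminates, with $z_i^*$ the complex conjugate. Define recursively $\mathcal{C}_1=(z_1)$ and, for $k>1$, the $2^{k-1}\times 2^{k-1}$ matrix $\mathcal{C}_k=\begin{pmatrix}\mathcal{C}_{k-1} & z_k I_{2^{k-2}}\\ -z_k^* I_{2^{k-2}} & \mathcal{C}_{k-1}^H\end{pmatrix}$, and let $\mathcal{C}_k^-$ be obtained from $\mathcal{C}_k$ by replacing $z_k$ with $z_k^*$. Both satisfy $\mathcal{C}^H\mathcal{C}=(\sum_i|z_i|^2)I$. For $m\ge 0$, $\mathcal{G}_{m}$ denotes the group of order $2^{m+1}$ generated by $g_1,\ldots,g_m$ and a central element $-1$ of order $2$, subject to $g_i^2=-1$ and $g_ig_j=-g_jg_i$ for $i\ne j$; its elements are $\pm\prod_{i\in S}g_i$, $S\subseteq\{1,\ldots,m\}$. Representation induced by a square design: write a square design $\mathcal{O}$ of size $n$ in the $k$ variables as $\mathcal{O}=\sum_{i=1}^k(z_iA_i+z_i^*B_i)$ with $A_i,B_i\in M_n(\mathbb{C})$; with $z_i=x_i+\sqrt{-1}y_i$ this is $\sum_{i=1}^k x_iF_i+\sum_{i=1}^k y_iF_{k+i}$ where $F_i=A_i+B_i$, $F_{k+i}=\sqrt{-1}(A_i-B_i)$. Set $E_{j}=F_{j+1}$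 for $j=0,\ldots,2k-1$ (these are unitary and satisfy $E_i^HE_j+E_j^HE_i=0$ for $i\neq j$), and $G_i=E_0^HE_i$ for $i=1,\ldots,2k-1$. The induced representation $\rho:\mathcal{G}_{2k-1}\to U_n(\mathbb{C})$ is the homomorphism with $\rho(g_i)=G_i$ and $\rho(-1)=-I_n$. *)

(* Defs.v *)
From HB Require Import structures.
From mathcomp Require Import all_boot all_order all_algebra.
Set Implicit Arguments. Unset Strict Implicit. Unset Printing Implicit Defensive.
Import Order.TTheory GRing.Theory Num.Theory.
Local Open Scope ring_scope.

(* Complex field: an arbitrary numClosedFieldType C (e.g. algC, or R[i] for
   R : rcfType); conjugation is Num.conj (notation z^* ), 'i is Num.i. *)

Section Designs.
Variable C : numClosedFieldType.

Definition mxH (n : nat) (A : 'M[C]_n) : 'M[C]_n := (map_mx Num.conj A)^T.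

(* A square design of size n in the variables z_0, z_1, ... (0-indexed) is
   given by its coefficient matrices: O = \sum_i (z_i A_i + z_i^* B_i);
   D i = (A_i, B_i). (Only finitely many indices are nonzero.) *)
Definition design (n : nat) := nat -> 'M[C]_n * 'M[C]_n.

(* Conjugate transpose of a design: (z A + z^* B)^H = z^* A^H + z B^H *)
Definition designH n (D : design n) : design n :=
  fun i => (mxH (D i).2, mxH (D i).1).

(* size of C_{k+1} : 2^k, given with the block structure *)
Fixpoint sz (k : nat) : nat := if k is k'.+1 then sz k' + sz k' else 1.

(* Cdes k = the design C_{k+1} in variables z_1..z_{k+1} (stored at 0..k) *)
Fixpoint Cdes (k : nat) : design (sz k) :=
  match k with
  | 0 => fun i => if i == 0%N then (1%:M, 0) else (0, 0)
  | k'.+1 => fun i =>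
      if (i < k'.+1)%N then
        (block_mx (Cdes k' i).1 0 0 (designH (Cdes k') i).1,
         block_mx (Cdes k' i).2 0 0 (designH (Cdes k') i).2)
      else if i == k'.+1 then
        (block_mx 0 1%:M 0 0, block_mx 0 0 (- 1%:M) 0)
      else (0, 0)
  end.

(* C^-_{k+1}: replace the last variable z_{k+1} by its conjugate, i.e.
   swap its coefficient matrices A and B *)
Definition Cminus (k : nat) : design (sz k) :=
  fun i => if i == k then ((Cdes k i).2, (Cdes k i).1) else Cdes k i.

(* F_1..F_{2k}, reindexed as E_0..E_{2k-1} (E_j = F_{j+1}), for a design in
   k variables *)
Definition Emx n (k : nat) (D : design n) (j : nat) : 'M[C]_n :=
  if (j < k)%N then (D j).1 + (D j).2
  else 'i *: ((D (j - k)%N).1 - (D (j - k)%N).2).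

(* G_i = E_0^H E_i, i = 1..2k-1; generator g_{i+1} is indexed by i : 'I_m,
   m = 2k-1 *)
Definition Gmx n k (D : design n) (i : 'I_(2 * k).-1) : 'M[C]_n :=
  mxH (Emx k D 0) *m Emx k D i.+1.

End Designs.

(* The group G_m: elements  (-1)^s * prod_{i in S} g_i  (product in increasing
   order of indices), encoded as (s, S). *)
Definition Gelt (m : nat) := (bool * {set 'I_m})%type.

(* Group law in this normal form:
   g_S g_T = (-1)^(#{(i,j) in S x T | j < i} + #(S :&: T)) g_(S Delta T)
   (using g_i^2 = -1 and g_i g_j = - g_j g_i for i <> j). *)
Definition Gmul m (x y : Gelt m) : Gelt m :=
  let: (s, A) := x in let: (t, B) := y in
  (s (+) t (+) odd (#|[set p in setX A B | (p.2 < p.1)%N]| + #|A :&: B|),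
   (A :\: B) :|: (B :\: A)).

Section Reps.
Variable C : numClosedFieldType.

Definition rho_of n m (G : 'I_m -> 'M[C]_n) (x : Gelt m) : 'M[C]_n :=
  let: (s, A) := x in (-1) ^+ s *: \big[mulmx/1%:M]_(i in A) G i.

Definition is_unitary_rep n m (G : 'I_m -> 'M[C]_n) : Prop :=
  (forall x y, rho_of G (Gmul x y) = rho_of G x *m rho_of G y) /\
  (forall x, rho_of G x *m mxH (rho_of G x) = 1%:M).

(* irreducible: n > 0 and no proper nonzero subspace of C^n (column vectors)
   invariant under all rho(x); a subspace is the row space of U, and
   invariance of columns under v |-> rho(x) v is  U rho(x)^T <= U. *)
Definition irreducible_rep n m (G : 'I_m -> 'M[C]_n) : Prop :=
  (0 < n)%N /\
  forall U : 'M[C]_n,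
    (forall x, (U *m (rho_of G x)^T <= U)%MS) ->
    \rank U = 0%N \/ \rank U = n.

Definition equivalent_reps n m (G1 G2 : 'I_m -> 'M[C]_n) : Prop :=
  exists P : 'M[C]_n, P \in unitmx /\
    forall x, P *m rho_of G1 x = rho_of G2 x *m P.

End Reps.
Arguments Gmx {C n} k D i.

(* Main.v *)
Require Import Defs.
From HB Require Import structures.
From mathcomp Require Import all_boot all_order all_algebra zify.
Set Implicit Arguments. Unset Strict Implicit. Unset Printing Implicit Defensive.
Import Order.TTheory GRing.Theory Num.Theory.
Local Open Scope ring_scope.

Section MxH.
Variable C : numClosedFieldType.
Implicit Types n : nat.

Lemma mxHD n (A B : 'M[C]_n) : mxH (A + B) = mxH A + mxH B.
Proof. by rewrite /mxH map_mxD linearD. Qed.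
Lemma mxHN n (A : 'M[C]_n) : mxH (- A) = - mxH A.
Proof. by rewrite /mxH map_mxN linearN. Qed.
Lemma mxHB n (A B : 'M[C]_n) : mxH (A - B) = mxH A - mxH B.
Proof. by rewrite mxHD mxHN. Qed.
Lemma mxHZ n c (A : 'M[C]_n) : mxH (c *: A) = c^* *: mxH A.
Proof. by rewrite /mxH map_mxZ linearZ. Qed.
Lemma mxHM n (A B : 'M[C]_n) : mxH (A *m B) = mxH B *m mxH A.
Proof. by rewrite /mxH map_mxM trmx_mul. Qed.
Lemma mxHs n c : mxH (c%:M : 'M[C]_n) = (c^*)%:M.
Proof. by rewrite /mxH map_scalar_mx tr_scalar_mx. Qed.
Lemma mxH1 n : mxH (1%:M : 'M[C]_n) = 1%:M.
Proof. by rewrite mxHs conjC1. Qed.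
Lemma mxH0 n : mxH (0 : 'M[C]_n) = 0.
Proof. by rewrite /mxH map_mx0 trmx0. Qed.
Lemma mxHK n (A : 'M[C]_n) : mxH (mxH A) = A.
Proof. by apply/matrixP => i j; rewrite !mxE conjCK. Qed.
Lemma mxH_block n1 n2 (A : 'M[C]_n1) (B : 'M[C]_(n1,n2)) (Cc : 'M[C]_(n2,n1)) (D : 'M[C]_n2) :
  mxH (block_mx A B Cc D) = block_mx (mxH A) (map_mx Num.conj Cc)^T (map_mx Num.conj B)^T (mxH D).
Proof. by rewrite /mxH map_block_mx tr_block_mx. Qed.
End MxH.

HB.instance Definition mulmx_monoid (R : pzRingType) (k : nat) :=
  Monoid.isLaw.Build 'M[R]_k 1%:M (@mulmx R k k k)
    (@mulmxA R k k k k) (@mul1mx R k k) (@mulmx1 R k k).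

Section Abs.
Variable C : numClosedFieldType.
Variable n : nat.

Lemma mA (a b c : 'M[C]_n) : a *m (b *m c) = a *m b *m c.
Proof. exact: mulmxA. Qed.

Definition P m (G : 'I_m -> 'M[C]_n) (A : {set 'I_m}) :=
  \big[mulmx/1%:M]_(i in A) G i.

Lemma P_comm m (G : 'I_m -> 'M[C]_n) X (c : 'I_m -> C) :
  (forall i, X *m G i = c i *: (G i *m X)) ->
  forall A, X *m P G A = (\prod_(i in A) c i) *: (P G A *m X).
Proof.
move=> HX A; rewrite /P; elim/big_rec2: _ => [|i y p _ IH].
  by rewrite mulmx1 mul1mx scale1r.
by rewrite mA HX -scalemxAl -mA IH -scalemxAr scalerA mA.
Qed.

Definition sh m (A : {set 'I_m.+1}) : {set 'I_m} := [set i | lift ord0 i \in A].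

Lemma P_recl m (G : 'I_m.+1 -> 'M[C]_n) A :
  P G A = (if ord0 \in A then G ord0 else 1%:M) *m P (fun i => G (lift ord0 i)) (sh A).
Proof.
rewrite /P big_mkcond big_ord_recl /=; congr (_ *m _).
by rewrite [RHS]big_mkcond; apply: eq_bigr => i _; rewrite inE.
Qed.

Lemma card_recl m (A : {set 'I_m.+1}) : #|A| = ((ord0 \in A) + #|sh A|)%N.
Proof.
rewrite -!sum1_card big_mkcond big_ord_recl /= [in RHS]big_mkcond /=.
congr addn.
by apply: eq_bigr => i _; rewrite inE.
Qed.

Definition Npairs m (A B : {set 'I_m}) := #|[set p in setX A B | (p.2 < p.1)%N]|.

Lemma Npairs_sum m (A B : {set 'I_m}) :
  Npairs A B = (\sum_a \sum_b ((a \in A) && (b \in B) && (b < a)%N))%N.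
Proof.
rewrite /Npairs -sum1_card big_mkcond pair_big /=.
by apply: eq_bigr => -[a b] _; rewrite !inE /=; case: (_ && _).
Qed.

Lemma Npairs_recl m (A B : {set 'I_m.+1}) :
  Npairs A B = ((ord0 \in B) * #|sh A| + Npairs (sh A) (sh B))%N.
Proof.
rewrite !Npairs_sum big_ord_recl /= big1 ?add0n; last first.
  by move=> b _; rewrite ltn0 andbF.
rewrite -sum1_card [X in (_ * X)%N]big_mkcond big_distrr /= -big_split /=.
apply: eq_bigr => a _; rewrite big_ord_recl /= !inE.
case: (lift ord0 a \in A); case: (ord0 \in B) => /=;
  by congr addn; apply: eq_bigr => b _; rewrite inE.
Qed.
End Abs.

From mathcomp Require Import zify.
Section Hom.
Variable C : numClosedFieldType.
Variable n : nat.
Local Notation mA := (@mA C n).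
Lemma sA (a b : C) (X : 'M[C]_n) : a *: (b *: X) = (a * b) *: X.
Proof. exact: scalerA. Qed.
Lemma sAl (a : C) (X Y : 'M[C]_n) : (a *: X) *m Y = a *: (X *m Y).
Proof. by rewrite scalemxAl. Qed.
Lemma sAr (a : C) (X Y : 'M[C]_n) : X *m (a *: Y) = a *: (X *m Y).
Proof. by rewrite scalemxAr. Qed.

Definition Nc m (A B : {set 'I_m}) := (Npairs A B + #|A :&: B|)%N.
Definition symd m (A B : {set 'I_m}) := (A :\: B) :|: (B :\: A).

Lemma Nc_recl m (A B : {set 'I_m.+1}) :
  Nc A B = ((ord0 \in B) * #|sh A| + ((ord0 \in A) && (ord0 \in B)) + Nc (sh A) (sh B))%N.
Proof.
rewrite /Nc Npairs_recl (card_recl (A :&: B)).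
have -> : sh (A :&: B) = sh A :&: sh B by apply/setP=> i; rewrite !inE.
rewrite inE; set x := (_ * _)%N; set y := Npairs _ _; set z := #|_|.
case: (_ && _) => /=; lia.
Qed.

Lemma sh_symd m (A B : {set 'I_m.+1}) : sh (symd A B) = symd (sh A) (sh B).
Proof. by apply/setP=> i; rewrite !inE. Qed.

Lemma in_symd m (A B : {set 'I_m}) i : (i \in symd A B) = (i \in A) (+) (i \in B).
Proof. by rewrite !inE; case: (i \in A); case: (i \in B). Qed.

Lemma Psign_comm m (G : 'I_m -> 'M[C]_n) X :
  (forall i, X *m G i = - (G i *m X)) ->
  forall A, X *m P G A = (-1) ^+ #|A| *: (P G A *m X).
Proof.
move=> H A; rewrite (@P_comm C n m G X (fun _ => -1)) ?prodr_const //.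
by move=> i; rewrite H scaleN1r.
Qed.

Lemma P_hom m (G : 'I_m -> 'M[C]_n) :
  (forall i, G i *m G i = - 1%:M) ->
  (forall i j, i != j -> G i *m G j = - (G j *m G i)) ->
  forall A B, P G A *m P G B = (-1) ^+ (Nc A B) *: P G (symd A B).
Proof.
elim: m G => [|m IH] G Hsq Hanti A B.
  have P0 (S : {set 'I_0}) : P G S = 1%:M by rewrite /P big_mkcond big_ord0.
  rewrite !P0 mul1mx /Nc Npairs_sum big_ord0 add0n.
  have -> : #|A :&: B| = 0%N by apply/eqP; rewrite -leqn0 (leq_trans (max_card _)) ?card_ord.
  by rewrite scale1r.
set G' := fun i => G (lift ord0 i).
have Hsq' i : G' i *m G' i = - 1%:M by apply: Hsq.
have Hanti' i j : i != j -> G' i *m G' j = - (G' j *m G' i).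
  by move=> ij; apply: Hanti; rewrite (inj_eq (@lift_inj _ ord0)).
have HC := @Psign_comm m G' (G ord0) (fun i => Hanti _ _ (neq_lift ord0 i)).
have HC' S : P G' S *m G ord0 = (-1) ^+ #|S| *: (G ord0 *m P G' S).
  by rewrite HC scalerA -exprD addnn -signr_odd odd_double scale1r.
rewrite !(P_recl G) Nc_recl sh_symd in_symd -/G'.
case: (ord0 \in A); case: (ord0 \in B); rewrite /= ?mul1mx ?mul0n ?mul1n ?addn0 ?add0n.
- have -> : G ord0 *m P G' (sh A) *m (G ord0 *m P G' (sh B)) =
      (-1) ^+ (#|sh A|).+1 *: (P G' (sh A) *m P G' (sh B)).
    rewrite -mA (mA (P G' (sh A))) HC' -scalemxAl -scalemxAr !mA Hsq.
    by rewrite !mulNmx mul1mx scalerN exprSr mulrN1 scaleNr.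
  by rewrite IH // sA -exprD addn1 addSn.
- by rewrite -mA IH // sAr.
- by rewrite mA HC' sAl -mA IH // sAr sA -exprD.
- by rewrite IH.
Qed.
End Hom.

Section Rep.
Variable C : numClosedFieldType.
Variable n : nat.
Local Notation mA := (@mA C n).
Local Notation sA := (@sA C n).
Local Notation sAl := (@sAl C n).
Local Notation sAr := (@sAr C n).

Definition clifford m (G : 'I_m -> 'M[C]_n) :=
  [/\ forall i, G i *m G i = - 1%:M,
      forall i j, i != j -> G i *m G j = - (G j *m G i) &
      forall i, G i *m mxH (G i) = 1%:M].

Lemma P_unit m (G : 'I_m -> 'M[C]_n) :
  (forall i, G i *m mxH (G i) = 1%:M) -> forall A, P G A *m mxH (P G A) = 1%:M.
Proof.
move=> HG A; rewrite /P; elim/big_rec: _ => [|i y _ IH]; first by rewrite mxH1 mulmx1.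
by rewrite mxHM mA -(mA (G i)) IH mulmx1 HG.
Qed.

Lemma rhoE m (G : 'I_m -> 'M[C]_n) s A : rho_of G (s, A) = (-1) ^+ s *: P G A.
Proof. by []. Qed.

Lemma clifford_rep m (G : 'I_m -> 'M[C]_n) : clifford G -> is_unitary_rep G.
Proof.
case=> Hsq Hanti Hu; split.
  move=> [s A] [t B]; rewrite /Gmul !rhoE sAl sAr sA P_hom // sA.
  by rewrite !signr_addb signr_odd.
move=> [s A]; rewrite rhoE mxHZ rmorph_sign sAl sAr sA P_unit //.
by rewrite -signr_addb addbb scale1r.
Qed.

Lemma P_scale m (G G2 : 'I_m -> 'M[C]_n) (c : 'I_m -> C) :
  (forall i, G2 i = c i *: G i) -> forall A, P G2 A = (\prod_(i in A) c i) *: P G A.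
Proof.
move=> H A; rewrite /P; elim/big_rec3: _ => [|i p q r _ ->]; first by rewrite scale1r.
by rewrite H sAl sAr sA.
Qed.

Lemma P_neg m (G G2 : 'I_m -> 'M[C]_n) (l : 'I_m) :
  (forall i, G2 i = if i == l then - G i else G i) ->
  forall A, P G2 A = (-1) ^+ (l \in A) *: P G A.
Proof.
move=> H A; rewrite (@P_scale m G G2 (fun i => if i == l then -1 else 1)); last first.
  by move=> i; rewrite H; case: (i == l); rewrite ?scaleN1r ?scale1r.
congr (_ *: _); case: (boolP (l \in A)) => lA.
  rewrite (big_setD1 l lA) eqxx big1 /=. rewrite Monoid.mulm1. exact: (esym (expr1 _)).
  move=> i; rewrite !inE.
  by case/andP=> /negPf ->.
by rewrite big1 // => i iA; case: eqP iA => // ->; rewrite (negPf lA).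
Qed.

Lemma clifford_neg m (G G2 : 'I_m -> 'M[C]_n) (l : 'I_m) :
  (forall i, G2 i = if i == l then - G i else G i) -> clifford G -> clifford G2.
Proof.
move=> H [Hsq Hanti Hu]; split.
- by move=> i; rewrite H; case: (i == l); rewrite ?mulNmx ?mulmxN ?opprK.
- move=> i j ij; rewrite !H; case: (i == l); case: (j == l);
  by rewrite ?mulNmx ?mulmxN ?opprK Hanti ?opprK.
- by move=> i; rewrite H; case: (i == l); rewrite ?mxHN ?mulNmx ?mulmxN ?opprK.
Qed.
End Rep.

Section Trace.
Variable C : numClosedFieldType.
Variable n : nat.
Local Notation mA := (@mA C n).
Local Notation sA := (@sA C n).
Local Notation sAl := (@sAl C n).
Local Notation sAr := (@sAr C n).

Lemma Pcomm_j m (G : 'I_m -> 'M[C]_n) (R : {set 'I_m}) j :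
  clifford G -> G j *m P G R = (-1) ^+ #|R :\ j| *: (P G R *m G j).
Proof.
case=> Hsq Hanti _.
rewrite (@P_comm C n m G (G j) (fun i => if i == j then 1 else -1)); last first.
  move=> i; case: eqP => [->|/eqP ij]; first by rewrite scale1r.
  by rewrite Hanti 1?eq_sym // scaleN1r.
congr (_ *: _); case: (boolP (j \in R)) => jR.
  rewrite (big_setD1 j jR) eqxx /= Monoid.mul1m -prodr_const.
  by apply: eq_bigr => i; rewrite !inE => /andP[/negPf ->].
have -> : R :\ j = R by apply/setP => i; rewrite !inE; case: eqP => // ->; rewrite (negPf jR).
rewrite -prodr_const; apply: eq_bigr => i iR; case: eqP => // E.
by move: iR; rewrite E (negPf jR).
Qed.

Lemma trace0 m (G : 'I_m -> 'M[C]_n) (R : {set 'I_m}) l :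
  clifford G -> R != set0 -> l \notin R -> \tr (P G R) = 0.
Proof.
move=> HG R0 lR.
have [j Hj] : exists j, odd #|R :\ j|.
  case: (boolP (odd #|R|)) => oR.
    exists l; have := cardsD1 l R; rewrite (negPf lR) add0n => <-; exact: oR.
  case/set0Pn: R0 => j jR; exists j; move: oR; rewrite (cardsD1 j R) jR /=.
  by rewrite negbK.
have HC := Pcomm_j R j HG.
move: HC; rewrite -signr_odd Hj expr1 scaleN1r => HC.
case: HG => _ _ Hu.
have Hu' : mxH (G j) *m G j = 1%:M by apply: mulmx1C; apply: Hu.
have E : \tr (P G R) = - \tr (P G R).
  rewrite -{1}(mul1mx (P G R)) -Hu' -mA HC mulmxN raddfN /= mxtrace_mulC -mA Hu mulmx1.
  done.
have : \tr (P G R) *+ 2 == 0 by rewrite mulr2n {1}E addNr.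
by rewrite mulrn_eq0 => /eqP.

Qed.
End Trace.

Section Span.
Variable C : numClosedFieldType.
Variable n N : nat.
Variable G : 'I_N.+1 -> 'M[C]_n.
Hypothesis HG : clifford G.
Hypothesis n_gt0 : (0 < n)%N.
Hypothesis Hnn : (n * n = 2 ^ N)%N.
Local Notation mA := (@mA C n).
Local Notation sA := (@sA C n).
Local Notation sAl := (@sAl C n).
Local Notation sAr := (@sAr C n).

Definition ext (S : {set 'I_N}) : {set 'I_N.+1} := [set widen_ord (leqnSn N) i | i in S].
Definition Mf (S : {set 'I_N}) := P G (ext S).

Lemma notin_ext S : ord_max \notin ext S.
Proof.
apply/imsetP => -[i _ /(congr1 val)] /= E.
by have := ltn_ord i; rewrite -E ltnn.
Qed.

Lemma ext_inj : injective ext.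
Proof. by apply: imset_inj => i j /(congr1 val) /= /val_inj. Qed.

Lemma symdK m (A B : {set 'I_m}) : symd A (symd A B) = B.
Proof. by apply/setP => i; rewrite !in_symd; case: (i \in A); case: (i \in B). Qed.

Lemma orth (S1 S2 : {set 'I_N}) : \tr (mxH (Mf S1) *m Mf S2) = (S1 == S2)%:R * n%:R.
Proof.
have HG' := HG; case: HG' => Hsq Hanti Hu.
have HuL X : mxH (P G X) *m P G X = 1%:M by apply: mulmx1C; apply: P_unit.
rewrite /Mf; case: eqP => [->|ne]; first by rewrite HuL mxtrace1 mul1r.
set A := ext S1; set B := symd A (ext S2).
have E := P_hom Hsq Hanti A B; rewrite /B symdK in E.
have E2 : P G (ext S2) = (-1) ^+ (Nc A B) *: (P G A *m P G B).
  by rewrite E sA -exprD addnn -signr_odd odd_double scale1r.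
rewrite E2 sAr mA HuL mul1mx mxtraceZ (@trace0 C n _ G B ord_max HG) ?mulr0 ?mul0r //.
  apply/set0Pn; case: (set0Pn B) => // H; exfalso; apply: ne; apply: ext_inj.
  apply/setP => i; apply/idP/idP => Hi.
  - case: (boolP (i \in ext S2)) => // H2; exfalso; apply: H; exists i.
    by rewrite /B in_symd Hi (negPf H2).
  - case: (boolP (i \in A)) => // H2; exfalso; apply: H; exists i.
    by rewrite /B in_symd Hi (negPf H2).
by rewrite /B in_symd (negPf (notin_ext _)) (negPf (notin_ext _)).
Qed.

Lemma dotvec (A B : 'M[C]_n) :
  \sum_j mxvec A 0 j * mxvec B 0 j = \tr (A *m B^T).
Proof.
rewrite (reindex _ (curry_mxvec_bij _ _)) /=.
have -> : \tr (A *m B^T) = \sum_i \sum_k A i k * B i k.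
  by apply: eq_bigr => i _; rewrite !mxE; apply: eq_bigr => k _; rewrite !mxE.
rewrite pair_big; apply: eq_bigr => -[i k] _ /=.
by rewrite !mxvecE.
Qed.

Lemma card_setT : #|{set 'I_N}| = (2 ^ N)%N.
Proof. by rewrite -cardsT -powersetT card_powerset cardsT card_ord. Qed.

Definition Mbig : 'M[C]_(#|{set 'I_N}|, n * n) :=
  \matrix_(s, j) mxvec (Mf (enum_val s)) 0 j.
Definition Nbig : 'M[C]_(n * n, #|{set 'I_N}|) :=
  \matrix_(j, t) mxvec ((mxH (Mf (enum_val t)))^T) 0 j.

Lemma MN : Mbig *m Nbig = (n%:R)%:M.
Proof.
apply/matrixP => s t; rewrite !mxE.
under eq_bigr => j _ do rewrite !mxE.
rewrite dotvec trmxK mxtrace_mulC orth (inj_eq enum_val_inj) eq_sym.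
by case: (s == t); rewrite ?mul1r ?mul0r.
Qed.

Lemma Mbig_full : row_full Mbig.
Proof.
have H1 : \rank (Mbig *m Nbig) = #|{set 'I_N}|.
  rewrite MN -scalemx1 mxrank_scale_nz ?mxrank1 //.
  by rewrite pnatr_eq0 -lt0n.
have : (#|{set 'I_N}| <= \rank Mbig)%N by rewrite -{1}H1 mxrankM_maxl.
move=> H2; apply/eqP/anti_leq; rewrite rank_leq_col /=.
by apply: leq_trans H2; rewrite card_setT Hnn.
Qed.

Lemma span (X : 'M[C]_n) :
  exists w : 'rV[C]_#|{set 'I_N}|, X = \sum_t w 0 t *: Mf (enum_val t).
Proof.
have : (mxvec X <= Mbig)%MS by apply: submx_full; apply: Mbig_full.
case/submxP => D HD; exists D.
rewrite -[X]mxvecK HD mulmx_sum_row linear_sum; apply: eq_bigr => t _.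
rewrite linearZ /=; congr (_ *: _); rewrite -[Mf _]mxvecK; congr vec_mx.
by apply/rowP => j; rewrite !mxE.
Qed.

Lemma comm_all (Q : 'M[C]_n) :
  (forall S, Q *m Mf S = Mf S *m Q) -> forall X, Q *m X = X *m Q.
Proof.
move=> H X; case: (span X) => w ->; rewrite mulmx_sumr mulmx_suml.
by apply: eq_bigr => t _; rewrite sAr sAl H.
Qed.

Lemma inv_all (U : 'M[C]_n) :
  (forall S, (U *m (Mf S)^T <= U)%MS) -> forall Y, (U *m Y <= U)%MS.
Proof.
move=> H Y; case: (span Y^T) => w E.
rewrite -[Y]trmxK E linear_sum mulmx_sumr; apply: summx_sub => t _.
by rewrite linearZ /= sAr; apply: scalemx_sub.
Qed.
End Span.

Lemma full_inv (C : numClosedFieldType) n (U : 'M[C]_n) :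
  (forall Y, (U *m Y <= U)%MS) -> \rank U = 0%N \/ \rank U = n.
Proof.
move=> H; case: (eqVneq U 0) => [->|U0]; first by left; rewrite mxrank0.
right.
case: (pickP (fun p : 'I_n * 'I_n => U p.1 p.2 != 0)) => [[i j] /= Hij | H0]; last first.
  by case/eqP: U0; apply/matrixP => i j; move: (H0 (i, j)) => /= /negbFE/eqP ->; rewrite mxE.
have Hd l : (delta_mx i l <= U)%MS.
  have E : delta_mx i i *m (U *m delta_mx j l) = U i j *: delta_mx i l.
    apply/matrixP => a b; rewrite !mxE (bigD1 i) //= big1 => [|c /negPf ci]; last first.
      by rewrite !mxE ci andbF mul0r.
    rewrite !mxE (bigD1 j) //= big1 => [|d /negPf dj]; last first.
      by rewrite !mxE dj mulr0.
    rewrite !mxE !eqxx /= !addr0.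
    by case: (a == i); case: (b == l); rewrite /= ?mulr1 ?mul1r ?mulr0 ?mul0r.
  have : (U i j *: delta_mx i l <= U)%MS.
    by rewrite -E (submx_trans (submxMl _ _) (H _)).
  by move/(scalemx_sub (U i j)^-1); rewrite scalerA mulVf // scale1r.
have : row_full U.
  rewrite -sub1mx mx1_sum_delta; apply: summx_sub => l _.
  by rewrite -(mul_delta_mx i) (submx_trans (submxMl _ _) (Hd l)).
by move/eqP.
Qed.


Lemma abstract_main (C : numClosedFieldType) n N m (Hm : m = N.+1)
  (G G2 : 'I_m -> 'M[C]_n) (l : 'I_m) (Hl : val l = N) :
  (0 < n)%N -> (n * n = 2 ^ N)%N -> clifford G ->
  (forall i, G2 i = if i == l then - G i else G i) ->
  is_unitary_rep G /\ is_unitary_rep G2 /\ irreducible_rep G /\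
  irreducible_rep G2 /\ ~ equivalent_reps G G2.
Proof.
subst m => n_gt0 Hnn HG H.
have El : l = ord_max by apply: val_inj.
subst l.
have HG2 := clifford_neg H HG.
have rho1 S : rho_of G (false, ext S) = Mf G S by rewrite rhoE scale1r.
have rho2 S : rho_of G2 (false, ext S) = Mf G S.
  by rewrite rhoE scale1r (P_neg H) (negPf (notin_ext _)) scale1r.
split; first exact: clifford_rep.
split; first exact: clifford_rep.
split.
  split => // U HU; apply: full_inv; apply: (inv_all HG n_gt0 Hnn) => S.
  by rewrite -rho1.
split.
  split => // U HU; apply: full_inv; apply: (inv_all HG n_gt0 Hnn) => S.
  by rewrite -rho2.
case=> Q [Qu HQ].
have Hc S : Q *m Mf G S = Mf G S *m Q by rewrite -{1}rho1 HQ rho2.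
set Z := P G [set: 'I_N.+1].
have E1 : Q *m Z = - (Z *m Q).
  have := HQ (false, [set: 'I_N.+1]); rewrite !rhoE !scale1r => ->.
  by rewrite (P_neg H) inE expr1 scaleN1r mulNmx.
have E2 := comm_all HG n_gt0 Hnn Hc Z.
have ZQ : Z *m Q = 0.
  have : (2%:R : C) *: (Z *m Q) = 0 by rewrite scaler_nat mulr2n -{1}E2 E1 addNr.
  move/(congr1 (fun X => (2%:R : C)^-1 *: X)).
  by rewrite scalerA mulVf ?pnatr_eq0 // scale1r scaler0.
have Q0 : Q = 0.
  case: HG => _ _ Hu.
  have HuL : mxH Z *m Z = 1%:M by apply: mulmx1C; apply: P_unit.
  by rewrite -(mul1mx Q) -HuL -mulmxA ZQ mulmx0.
have := mulVmx Qu; rewrite Q0 mulmx0 => /matrixP/(_ (Ordinal n_gt0) (Ordinal n_gt0)).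
by rewrite !mxE eqxx /= => /eqP; rewrite eq_sym oner_eq0.
Qed.

Section Conc.
Variable C : numClosedFieldType.

Lemma mxH_blk s (A B Cc D : 'M[C]_s) :
  mxH (block_mx A B Cc D) = block_mx (mxH A) (mxH Cc) (mxH B) (mxH D).
Proof. exact: mxH_block. Qed.

Definition relE s (X Y : 'M[C]_s) (c : bool) :=
  mxH X *m Y + mxH Y *m X = (c%:R *+ 2)%:M /\
  X *m mxH Y + Y *m mxH X = (c%:R *+ 2)%:M.

Definition dg s (X : 'M[C]_s) : 'M[C]_(s + s) := block_mx X 0 0 (mxH X).
Definition J1 s : 'M[C]_(s + s) := block_mx 0 1%:M (- 1%:M) 0.
Definition J2 s : 'M[C]_(s + s) := block_mx 0 ('i%:M) ('i%:M) 0.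

Lemma sc0 s : ((false%:R *+ 2)%:M : 'M[C]_s) = 0.
Proof. by apply/matrixP => i j; rewrite !mxE mul0rn mul0rn. Qed.
Lemma sc2 s : ((true%:R *+ 2)%:M : 'M[C]_s) = 1%:M + 1%:M.
Proof. by apply/matrixP => i j; rewrite !mxE; case: (i == j); rewrite ?mulr0n ?addr0 ?mulr1n. Qed.

Lemma rel_sym s (X Y : 'M[C]_s) c : relE X Y c -> relE Y X c.
Proof. by case=> h1 h2; split; rewrite addrC. Qed.

Lemma rel_dg s (X Y : 'M[C]_s) c : relE X Y c -> relE (dg X) (dg Y) c.
Proof.
case=> h1 h2; rewrite /relE /dg !mxH_blk !mxH0 !mxHK !mulmx_block.
rewrite !(mulmx0, mul0mx, addr0, add0r) !add_block_mx !(addr0, add0r) h1 h2.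
by rewrite -scalar_mx_block.
Qed.

Lemma iiE : 'i * 'i = -1 :> C.
Proof. by rewrite -expr2 sqrCi. Qed.

Lemma rel_dgJ1 s (X : 'M[C]_s) : relE (dg X) (J1 s) false.
Proof.
rewrite /relE /dg /J1 !mxH_blk !mxH0 !mxHK !mxHN !mxH1 !mulmx_block sc0.
rewrite !(mulmx0, mul0mx, mulmx1, mul1mx, mulmxN, mulNmx, addr0, add0r).
by rewrite !add_block_mx !(addr0, add0r, addrN, addNr) block_mx0.
Qed.

Lemma rel_dgJ2 s (X : 'M[C]_s) : relE (dg X) (J2 s) false.
Proof.
rewrite /relE /dg /J2 !mxH_blk !mxH0 !mxHK !mxHs conjCi !mulmx_block sc0.
rewrite !(mulmx0, mul0mx, addr0, add0r) !mul_mx_scalar !mul_scalar_mx.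
rewrite !add_block_mx !scaleNr !(addr0, add0r, addrN, addNr).
by rewrite block_mx0.
Qed.

Lemma rel_J1J1 s : relE (J1 s) (J1 s) true.
Proof.
rewrite /relE /J1 !mxH_blk !mxH0 !mxHN !mxH1 !mulmx_block.
rewrite !(mulmx0, mul0mx, mulmx1, mul1mx, mulmxN, mulNmx, addr0, add0r, opprK).
rewrite !add_block_mx !(addr0, add0r).
by split; rewrite [RHS]scalar_mx_block sc2.
Qed.

Lemma rel_J2J2 s : relE (J2 s) (J2 s) true.
Proof.
rewrite /relE /J2 !mxH_blk !mxH0 !mxHs conjCi !mulmx_block.
rewrite !(mulmx0, mul0mx, addr0, add0r) -!scalar_mxM mulrN mulNr iiE opprK.
rewrite !add_block_mx !(addr0, add0r).
by split; rewrite [RHS]scalar_mx_block sc2.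
Qed.

Lemma rel_J1J2 s : relE (J1 s) (J2 s) false.
Proof.
rewrite /relE /J1 /J2 !mxH_blk !mxH0 !mxHN !mxH1 !mxHs conjCi !mulmx_block sc0.
rewrite !(mulmx0, mul0mx, mulmx1, mul1mx, mulmxN, mulNmx, addr0, add0r).
rewrite !add_block_mx !(addr0, add0r, addrN, addNr, opprK) !raddfN /= !(opprK, addrN, addNr, subrr) block_mx0.
by split.

Qed.

Definition Eorth s (E : nat -> 'M[C]_s) K :=
  forall a b, (a < K)%N -> (b < K)%N -> relE (E a) (E b) (a == b).

Definition Fn s (E : nat -> 'M[C]_s) K (j : nat) : 'M[C]_(s + s) :=
  if j == K then J1 s else if j == (2 * K).+1 then J2 s
  else dg (E (if (j < K)%N then j else j.-1)).

Lemma neqF (a b : nat) : a <> b -> (a == b) = false.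
Proof. by move=> h; apply/eqP. Qed.

Lemma Eorth_step s (E : nat -> 'M[C]_s) K : Eorth E (2 * K) -> Eorth (Fn E K) (2 * K + 2).
Proof.
move=> H a b Ha Hb; rewrite /Fn.
case: (eqVneq a K) => [aK|aK]; case: (eqVneq b K) => [bK|bK]; try subst a; try subst b.
- by rewrite eqxx; apply: rel_J1J1.
- rewrite [K == b]eq_sym (negbTE bK).
  case: (eqVneq b (2 * K).+1) => [_|b2]; first exact: rel_J1J2.
  by apply: rel_sym; apply: rel_dgJ1.
- rewrite (negbTE aK).
  case: (eqVneq a (2 * K).+1) => [_|a2]; first by apply: rel_sym; apply: rel_J1J2.
  exact: rel_dgJ1.
case: (eqVneq a (2 * K).+1) => [a2|a2]; case: (eqVneq b (2 * K).+1) => [b2|b2]; try subst a; try subst b.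
- by rewrite eqxx; apply: rel_J2J2.
- rewrite [(2 * K).+1 == b]eq_sym (negbTE b2).
  by apply: rel_sym; apply: rel_dgJ2.
- rewrite (negbTE a2).
  exact: rel_dgJ2.
have E1 : ((if (a < K)%N then a else a.-1) == (if (b < K)%N then b else b.-1)) = (a == b).
  move/eqP: aK; move/eqP: bK => bK aK.
  case: (ltnP a K) => ha; case: (ltnP b K) => hb; apply/eqP/eqP; lia.
rewrite -E1; apply: rel_dg; apply: H.
  by move/eqP: aK => aK; move/eqP: a2 => a2; case: (ltnP a K) => h; lia.
by move/eqP: bK => bK; move/eqP: b2 => b2; case: (ltnP b K) => h; lia.
Qed.
End Conc.

Section Conc2.
Variable C : numClosedFieldType.

Lemma Estep k j : (j < 2 * k.+1 + 2)%N ->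
  Emx k.+2 (Cdes C k.+1) j = Fn (fun j => Emx k.+1 (Cdes C k) j) k.+1 j.
Proof.
move=> Hj; rewrite /Fn /Emx.
case: (eqVneq j k.+1) => [->|jK].
  by rewrite ltnS leqnn /= ltnn eqxx /J1 add_block_mx !(addr0, add0r).
case: (eqVneq j (2 * k.+1).+1) => [->|j2].
  have -> : ((2 * k.+1).+1 < k.+2)%N = false by apply/negbTE; rewrite -leqNgt; lia.
  have -> : ((2 * k.+1).+1 - k.+2)%N = k.+1 by lia.
  rewrite /= ltnn eqxx /J2 opp_block_mx add_block_mx scale_block_mx.
  by rewrite !(oppr0, addr0, add0r, scaler0, opprK) !scalemx1.
case: (ltnP j k.+1) => h.
  rewrite ltnS (ltnW h) /= h.
  by rewrite /= /dg add_block_mx !(addr0, add0r) mxHD [X in block_mx _ _ _ X = _]addrC.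

have -> : (j < k.+2)%N = false by apply/negbTE; rewrite -leqNgt; lia.
have -> : (j.-1 < k.+1)%N = false by apply/negbTE; rewrite -leqNgt; lia.
have -> : (j.-1 - k.+1)%N = (j - k.+2)%N by lia.
have hh : (j - k.+2 < k.+1)%N by lia.
rewrite /= hh /dg opp_block_mx add_block_mx scale_block_mx !(oppr0, addr0, add0r, scaler0).
by rewrite mxHZ conjCi mxHB scaleNr -scalerN opprB.
Qed.

Lemma Eorth_ext s (E1 E2 : nat -> 'M[C]_s) K :
  (forall j, (j < K)%N -> E1 j = E2 j) -> Eorth E1 K -> Eorth E2 K.
Proof. by move=> h H a b Ha Hb; rewrite -!h //; apply: H. Qed.

Lemma Eorth_Cdes k : Eorth (fun j => Emx k.+1 (Cdes C k) j) (2 * k.+1)%N.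
Proof.
elim: k => [|k IH]; last first.
  have H := Eorth_step IH.
  have -> : (2 * k.+2 = 2 * k.+1 + 2)%N by lia.
  by apply: Eorth_ext H => j hj; rewrite Estep.
have E0 : Emx 1 (Cdes C 0) 0 = 1%:M by rewrite /Emx /= addr0.
have E1 : Emx 1 (Cdes C 0) 1 = 'i%:M by rewrite /Emx /= subr0 scalemx1.
move=> a b; case: a => [|[|a]] // _; case: b => [|[|b]] // _;
  rewrite ?E0 ?E1 /relE /= !mxHs ?conjC1 ?conjCi -!scalar_mxM ?sc0 ?sc2.
all: by split; rewrite ?(mul1r, mulr1, mulNr, mulrN, iiE, opprK) -?raddfD /= ?(addrN, addNr) ?raddf0.
Qed.

Lemma half s (X Y : 'M[C]_s) : X + X = Y + Y -> X = Y.
Proof.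
move=> h; have : (2%:R : C) *: X = (2%:R : C) *: Y by rewrite !scaler_nat !mulr2n.
move/(congr1 (fun Z => (2%:R : C)^-1 *: Z)).
by rewrite !scalerA mulVf ?pnatr_eq0 // !scale1r.
Qed.

Lemma clifford_G k : clifford (Gmx k.+1 (Cdes C k)).
Proof.
set E := fun j => Emx k.+1 (Cdes C k) j.
have HO : Eorth E (2 * k.+1)%N := @Eorth_Cdes k.
have HEu a : (a < 2 * k.+1)%N -> mxH (E a) *m E a = 1%:M /\ E a *m mxH (E a) = 1%:M.
  move=> ha; case: (HO a a ha ha); rewrite eqxx sc2 => h1 h2.
  by split; apply: half.
have HEa a b : (a < 2 * k.+1)%N -> (b < 2 * k.+1)%N -> a != b ->
    mxH (E a) *m E b = - (mxH (E b) *m E a).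
  move=> ha hb ab; case: (HO a b ha hb); rewrite (negPf ab) sc0 => h1 _.
  by apply/eqP; rewrite -addr_eq0 h1.
have Hlt (i : 'I_(2 * k.+1).-1) : (i.+1 < 2 * k.+1)%N.
  by have := ltn_ord i; lia.
have H0 : (0 < 2 * k.+1)%N by lia.
have GG (i j : 'I_(2 * k.+1).-1) : Gmx k.+1 (Cdes C k) i *m Gmx k.+1 (Cdes C k) j =
    - (mxH (E i.+1) *m E j.+1).
  rewrite /Gmx -/E (HEa 0%N i.+1) // mulNmx -!mulmxA (mulmxA (E 0%N)).
  by rewrite (proj2 (HEu 0%N H0)) mul1mx.
split.
- by move=> i; rewrite GG (proj1 (HEu _ (Hlt i))).
- move=> i j ij; rewrite !GG (HEa i.+1 j.+1) ?opprK //.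
- move=> i; rewrite /Gmx -/E mxHM mxHK -!mulmxA (mulmxA (E i.+1)).
  by rewrite (proj2 (HEu _ (Hlt i))) mul1mx (proj1 (HEu 0%N H0)).
Qed.

Lemma Eminus k j : Emx k.+1 (Cminus C k) j =
  if j == ((2 * k).+1)%N then - Emx k.+1 (Cdes C k) j else Emx k.+1 (Cdes C k) j.
Proof.
rewrite /Emx /Cminus; case: (ltnP j k.+1) => h.
  have -> : (j == ((2 * k).+1)%N) = false by apply/negbTE; lia.
  by case: (j == k) => //=; rewrite addrC.
have -> : ((j - k.+1)%N == k) = (j == ((2 * k).+1)%N) by apply/eqP/eqP; lia.
case: (j == _) => //=.
by rewrite -scalerN opprB.
Qed.

Lemma Gminus k (i : 'I_(2 * k.+1).-1) : Gmx k.+1 (Cminus C k) i =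
  if (i == (2 * k)%N :> nat) then - Gmx k.+1 (Cdes C k) i else Gmx k.+1 (Cdes C k) i.
Proof.
rewrite /Gmx !Eminus eqSS.
have -> : (0 == ((2 * k).+1)%N) = false by [].
by case: (_ == _) => //; rewrite mulmxN.
Qed.

Lemma sz_exp k : sz k = (2 ^ k)%N.
Proof. by elim: k => //= k ->; rewrite expnS mul2n addnn. Qed.
End Conc2.

Unset Implicit Arguments.
Unset Strict Implicit.

Theorem lemma3 (C : numClosedFieldType) (k' : nat) :
  sz k' = (2 ^ k')%N /\
  is_unitary_rep (Gmx k'.+1 (Cdes C k')) /\
  is_unitary_rep (Gmx k'.+1 (Cminus C k')) /\
  irreducible_rep (Gmx k'.+1 (Cdes C k')) /\
  irreducible_rep (Gmx k'.+1 (Cminus C k')) /\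
  ~ equivalent_reps (Gmx k'.+1 (Cdes C k')) (Gmx k'.+1 (Cminus C k')).
Proof.
split; first exact: sz_exp.
have Hl : (2 * k' < (2 * k'.+1).-1)%N by lia.
apply: (@abstract_main C (sz k') (2 * k') _ _ _ _ (Ordinal Hl)) => //.
- by lia.
- by rewrite sz_exp expn_gt0.
- by rewrite sz_exp -expnD; congr (_ ^ _)%N; lia.
- exact: clifford_G.
- by move=> i; rewrite Gminus.
Qed.
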